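(* Consider a network of $K\ge2$ sensors with $f^1_m=\dots=f^K_m=f_m$ for all $m=0,\dots,M-1$. Fix a state $m$ and let $\bar\phi^{0,\max}_m=\sum_jp^j_m\phi^{0,j}_m$ be a maximin quantizer for state $m$ in the single-sensor problem with densities $f_0,\dots,f_{M-1}$. For each $j$ let $\phi^{\cdot,j}_m=(\phi^{0,j}_m,\dots,\phi^{0,j}_m)$ be the $K$-fold replication, and let $\bar\phi^*_m=\sum_jp^j_m\phi^{\cdot,j}_m$. Then $\bar\phi^*_m$ is a maximin quantizer vector for state $m$.
   Context: Single-sensor notions: a raw observation $X$ has density $f_m$ under state $m\in\{0,\dots,M-1\}$ (probability $\mathbf P_m$); deterministic quantizers are measurable maps to $\{0,1\}$ (set $\Phi$); a randomized quantizer $\bar\phi=\sum_jp^j\phi^j$ is a probability distribution on a countable subset of $\Phi$; $\bar\Phi$ is the set of all quantizers; $f_m(u;\phi)=\mathbf P_m(\phi(X)=u)$, $I(m,m';\phi)=\sum_uf_m(u;\phi)\log\frac{f_m(u;\phi)}{f_{m'}(u;\phi)}$, $I(m,m';\bar\phi)=\sum_jp^jI(m,m';\phi^j)$, $I(m;\bar\phi)=\min_{m'\ne m}I(m,m';\bar\phi)$, and a maximin quantizer for $m$ maximizes $I(m;\cdot)$ over $\bar\Phi$. Multi-sensor setting: sensor $k=1,\dots,K$ observes $X^k$ with density $f^k_m$ under $\mathbf P_m$, independent across sensors. A deterministic quantizer vector is $\phi=(\phi^1,\dots,\phi^K)$ with $\phi^k$ a deterministic quantizer at sensor $k$; $\Phi^{(K)}$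 is their set. A randomized quantizer vector is $\bar\phi=\sum_jp^j\phi^{\cdot,j}$, a probability distribution on a countable subset $\{\phi^{\cdot,j}\}\subset\Phi^{(K)}$; $\overline{\Phi^{(K)}}$ denotes all quantizer vectors. K-L divergences: $I(m,m';\phi)=\sum_{k=1}^KI(m,m';\phi^k)$ (with $I(m,m';\phi^k)$ computed from $f^k_m,f^k_{m'}$) and $I(m,m';\bar\phi)=\sum_jp^jI(m,m';\phi^{\cdot,j})$; $I(m;\bar\phi)=\min_{m'\neq m}I(m,m';\bar\phi)$; a maximin quantizer vector for state $m$ is a $\bar\phi\in\overline{\Phi^{(K)}}$ maximizing $I(m;\bar\phi)$ over $\overline{\Phi^{(K)}}$. *)

(* Defs.v *)
From Stdlib Require Import Reals List Classical ClassicalEpsilon.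
Import ListNotations.
Open Scope R_scope.

Record MeasSpace := {
  carrier :> Type;
  msets : (carrier -> Prop) -> Prop;
  ms_full : msets (fun _ => True);
  ms_compl : forall A, msets A -> msets (fun s => ~ A s);
  ms_union : forall A : nat -> carrier -> Prop,
      (forall n, msets (A n)) -> msets (fun s => exists n, A n s)
}.

Definition is_prob (X : MeasSpace) (P : (X -> Prop) -> R) : Prop :=
  (forall A, msets X A -> 0 <= P A) /\
  P (fun _ => True) = 1 /\
  (forall A : nat -> X -> Prop,
      (forall n, msets X (A n)) ->
      (forall n n' s, n <> n' -> A n s -> A n' s -> False) ->
      infinite_sum (fun n => P (A n)) (P (fun s => exists n, A n s))).

Inductive ER := Fin (r : R) | PInf.

Definition ERle (x y : ER) : Prop :=
  match x, y with
  | _, PInf => True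
  | PInf, Fin _ => False
  | Fin a, Fin b => a <= b
  end.

Definition ERplus (x y : ER) : ER :=
  match x, y with
  | Fin a, Fin b => Fin (a + b)
  | _, _ => PInf
  end.

Definition ERmin (x y : ER) : ER :=
  match x, y with
  | PInf, y => y
  | x, PInf => x
  | Fin a, Fin b => Fin (Rmin a b)
  end.

Definition ER_fin (x : ER) : R := match x with Fin a => a | PInf => 0 end.

(* A deterministic quantizer: a measurable map X -> {0,1} (bool: false=0, true=1). *)
Definition det_quant (X : MeasSpace) (phi : X -> bool) : Prop :=
  msets X (fun s => phi s = true).

Definition fq (X : MeasSpace) (Pm : (X -> Prop) -> R) (u : bool) (phi : X -> bool) : R :=
  Pm (fun s => phi s = u).

Definition kl_term (a b : R) : ER :=
  if Req_EM_T a 0 then Fin 0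
  else if Req_EM_T b 0 then PInf
  else Fin (a * ln (a / b)).

(* I(m, m'; phi) for a deterministic quantizer, P : state -> law of X *)
Definition KL_det (X : MeasSpace) (P : nat -> (X -> Prop) -> R)
    (m m' : nat) (phi : X -> bool) : ER :=
  ERplus (kl_term (fq X (P m) false phi) (fq X (P m') false phi))
         (kl_term (fq X (P m) true phi) (fq X (P m') true phi)).

(* sum_j p^j d_j for nonnegative weights and nonnegative extended values,
   with 0 * (+oo) = 0 and a divergent series = +oo *)
Definition mix (p : nat -> R) (d : nat -> ER) : ER :=
  match excluded_middle_informative (exists j, p j <> 0 /\ d j = PInf) with
  | left _ => PInf
  | right _ =>
      match excluded_middle_informative
              (exists v, infinite_sum (fun j => p j * ER_fin (d j)) v) with
      | left H => Fin (proj1_sig (constructive_indefinite_description _ H))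
      | right _ => PInf
      end
  end.

(* min over m' in {0..M-1}, m' <> m  (empty min = +oo) *)
Definition min_other (M m : nat) (g : nat -> ER) : ER :=
  fold_right (fun i acc => if Nat.eq_dec i m then acc else ERmin (g i) acc)
             PInf (seq 0 M).

(* A randomized quantizer sum_j p^j phi^j: probability weights on a countable
   family of deterministic quantizers. *)
Definition rand_quant (X : MeasSpace) (p : nat -> R) (phi : nat -> X -> bool) : Prop :=
  (forall j, 0 <= p j) /\ infinite_sum p 1 /\ (forall j, det_quant X (phi j)).

Definition KL_rand (X : MeasSpace) (P : nat -> (X -> Prop) -> R)
    (m m' : nat) (p : nat -> R) (phi : nat -> X -> bool) : ER :=
  mix p (fun j => KL_det X P m m' (phi j)).

Definition I_state (X : MeasSpace) (M : nat) (P : nat -> (X -> Prop) -> R)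
    (m : nat) (p : nat -> R) (phi : nat -> X -> bool) : ER :=
  min_other M m (fun m' => KL_rand X P m m' p phi).

Definition maximin (X : MeasSpace) (M : nat) (P : nat -> (X -> Prop) -> R)
    (m : nat) (p : nat -> R) (phi : nat -> X -> bool) : Prop :=
  rand_quant X p phi /\
  forall q psi, rand_quant X q psi ->
    ERle (I_state X M P m q psi) (I_state X M P m p phi).

(* Pk k m = law of X^k under state m (sensor k = 0..K-1);
   a quantizer vector is phi : sensor -> X -> bool (components k < K). *)
Definition det_quant_vec (X : MeasSpace) (K : nat) (phi : nat -> X -> bool) : Prop :=
  forall k, (k < K)%nat -> det_quant X (phi k).

Definition KL_det_vec (X : MeasSpace) (K : nat) (Pk : nat -> nat -> (X -> Prop) -> R)
    (m m' : nat) (phi : nat -> X -> bool) : ER :=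
  fold_right ERplus (Fin 0) (map (fun k => KL_det X (Pk k) m m' (phi k)) (seq 0 K)).

Definition rand_quant_vec (X : MeasSpace) (K : nat) (p : nat -> R)
    (phi : nat -> nat -> X -> bool) : Prop :=
  (forall j, 0 <= p j) /\ infinite_sum p 1 /\ (forall j, det_quant_vec X K (phi j)).

Definition KL_rand_vec (X : MeasSpace) (K : nat) (Pk : nat -> nat -> (X -> Prop) -> R)
    (m m' : nat) (p : nat -> R) (phi : nat -> nat -> X -> bool) : ER :=
  mix p (fun j => KL_det_vec X K Pk m m' (phi j)).

Definition I_state_vec (X : MeasSpace) (M K : nat) (Pk : nat -> nat -> (X -> Prop) -> R)
    (m : nat) (p : nat -> R) (phi : nat -> nat -> X -> bool) : ER :=
  min_other M m (fun m' => KL_rand_vec X K Pk m m' p phi).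

Definition maximin_vec (X : MeasSpace) (M K : nat) (Pk : nat -> nat -> (X -> Prop) -> R)
    (m : nat) (p : nat -> R) (phi : nat -> nat -> X -> bool) : Prop :=
  rand_quant_vec X K p phi /\
  forall q psi, rand_quant_vec X K q psi ->
    ERle (I_state_vec X M K Pk m q psi) (I_state_vec X M K Pk m p phi).

(* Main.v *)
Require Import Defs.
From Stdlib Require Import Reals List Classical ClassicalEpsilon Lra Lia FunctionalExtensionality PropExtensionality.
Import ListNotations.
Open Scope R_scope.

Definition rsum (l : list nat) (f : nat -> R) : R := fold_right (fun k acc => f k + acc) 0 l.
Definition psum (f : nat -> R) (n : nat) : R := rsum (seq 0 n) f.

Lemma rsum_app l1 l2 f : rsum (l1 ++ l2) f = rsum l1 f + rsum l2 f.
Proof. induction l1; simpl; [lra|]. unfold rsum in *; simpl; rewrite IHl1; lra. Qed.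

Lemma rsum_ext l f g : (forall k, In k l -> f k = g k) -> rsum l f = rsum l g.
Proof. induction l; simpl; intros H; auto. unfold rsum in *; simpl.
  rewrite H by auto; rewrite IHl; auto. Qed.

Lemma rsum_nonneg l f : (forall k, 0 <= f k) -> 0 <= rsum l f.
Proof. induction l; simpl; intros H; [lra|]. unfold rsum in *; simpl.
  specialize (IHl H); specialize (H a); lra. Qed.

Lemma rsum_scal l f a : rsum l (fun k => a * f k) = a * rsum l f.
Proof. induction l; unfold rsum in *; simpl; [lra|]. rewrite IHl; lra. Qed.

Lemma psum_add f a n : psum f (a + n) = psum f a + rsum (seq a n) f.
Proof. unfold psum. rewrite seq_app, rsum_app. reflexivity. Qed.

Lemma sum_f_psum f n : sum_f_R0 f n = psum f (S n).
Proof. induction n; unfold psum in *.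
  - simpl. unfold rsum; simpl. ring.
  - rewrite seq_S, rsum_app. simpl sum_f_R0. rewrite IHn. unfold rsum; simpl. ring. Qed.

Definition lim_ps f v := forall eps, eps > 0 -> exists N, forall n, (n >= N)%nat -> Rabs (psum f n - v) < eps.

Lemma inf_sum_iff f v : infinite_sum f v <-> lim_ps f v.
Proof. split; intros H eps He; destruct (H eps He) as [N HN].
  - exists (S N). intros n Hn. destruct n; [lia|]. rewrite <- sum_f_psum. apply HN. lia.
  - exists N. intros n Hn. unfold Rdist. rewrite sum_f_psum. apply HN. lia. Qed.

Lemma psum_mono f a b : (forall k, 0 <= f k) -> (a <= b)%nat -> psum f a <= psum f b.
Proof. intros H Hab. replace b with (a + (b - a))%nat by lia. rewrite psum_add.
  pose proof (rsum_nonneg (seq a (b-a)) f H). lra. Qed.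

Lemma psum_block (t T : nat -> R) K :
  (forall j, T j = rsum (seq (j*K) K) t) -> forall N, psum T N = psum t (N*K).
Proof. intros HT. induction N.
  - reflexivity.
  - unfold psum at 1. rewrite seq_S, rsum_app. fold (psum T N). rewrite IHN.
    replace (S N * K)%nat with (N*K + K)%nat by lia. rewrite psum_add.
    simpl (0 + N)%nat. unfold rsum at 2; simpl. rewrite HT. unfold rsum; ring. Qed.

Lemma block_lim (t T : nat -> R) K v : (1 <= K)%nat -> (forall k, 0 <= t k) ->
  (forall j, T j = rsum (seq (j*K) K) t) -> (lim_ps t v <-> lim_ps T v).
Proof. intros HK Ht HT. pose proof (psum_block t T K HT) as PB. split; intros H eps He;
  destruct (H eps He) as [N HN].
  - exists N. intros n Hn. rewrite PB. apply HN. nia.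
  - exists (N*K)%nat. intros n Hn. set (j := (n / K)%nat).
    assert (Hj : (N <= j)%nat) by (apply Nat.div_le_lower_bound; lia).
    assert (H1 : (j*K <= n)%nat) by (pose proof (Nat.Div0.mul_div_le n K); unfold j; lia).
    assert (H2 : (n <= S j * K)%nat) by (pose proof (Nat.mul_succ_div_gt n K); unfold j; lia).
    pose proof (psum_mono t _ _ Ht H1). pose proof (psum_mono t _ _ Ht H2).
    pose proof (HN j Hj) as A1. pose proof (HN (S j) ltac:(lia)) as A2.
    rewrite PB in A1, A2. apply Rabs_def1; apply Rabs_def2 in A1; apply Rabs_def2 in A2; lra. Qed.

Lemma lim_scal f v a : a > 0 -> (lim_ps (fun j => a * f j) (a * v) <-> lim_ps f v).
Proof. intros Ha. assert (E : forall n, psum (fun j => a * f j) n = a * psum f n)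
  by (intros; apply rsum_scal).
  split; intros H eps He.
  - destruct (H (a*eps) ltac:(nra)) as [N HN]. exists N. intros n Hn. specialize (HN n Hn).
    rewrite E in HN. replace (a * psum f n - a * v) with (a * (psum f n - v)) in HN by ring.
    rewrite Rabs_mult, (Rabs_right a) in HN by lra. nra.
  - destruct (H (eps/a) ltac:(apply Rdiv_lt_0_compat; lra)) as [N HN]. exists N. intros n Hn. specialize (HN n Hn).
    rewrite E. replace (a * psum f n - a * v) with (a * (psum f n - v)) by ring.
    rewrite Rabs_mult, (Rabs_right a) by lra.
    apply Rmult_lt_compat_l with (r := a) in HN; [|lra]. field_simplify in HN; lra. Qed.

Definition ERnn (x : ER) : Prop := match x with Fin r => 0 <= r | PInf => True end.
Definition scale (c : R) (x : ER) : ER := match x with Fin r => Fin (c * r) | PInf => PInf end.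

Lemma ER_fin_nn x : ERnn x -> 0 <= ER_fin x.
Proof. destruct x; simpl; lra. Qed.

Lemma scale_1 x : scale 1 x = x.
Proof. destruct x; simpl; auto. f_equal; ring. Qed.

Lemma scale_comp a b x : scale a (scale b x) = scale (a*b) x.
Proof. destruct x; simpl; auto. f_equal; ring. Qed.

Lemma scale_le c x y : c > 0 -> ERle x y -> ERle (scale c x) (scale c y).
Proof. destruct x, y; simpl; auto. intros; nra. Qed.

Lemma scale_min c x y : c > 0 -> scale c (ERmin x y) = ERmin (scale c x) (scale c y).
Proof. intros Hc; destruct x, y; simpl; auto. f_equal. unfold Rmin.
  destruct (Rle_dec r r0), (Rle_dec (c*r) (c*r0)); auto; exfalso; nra. Qed.

Lemma min_other_ext M m g h : (forall i, (i < M)%nat -> g i = h i) -> min_other M m g = min_other M m h.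
Proof. intros H. unfold min_other.
  assert (forall l, (forall i, In i l -> g i = h i) ->
    fold_right (fun i acc => if Nat.eq_dec i m then acc else ERmin (g i) acc) PInf l =
    fold_right (fun i acc => if Nat.eq_dec i m then acc else ERmin (h i) acc) PInf l) as G.
  { induction l; simpl; intros Hl; auto. rewrite IHl by auto. rewrite Hl by auto. reflexivity. }
  apply G. intros i Hi. apply in_seq in Hi. apply H. lia. Qed.

Lemma min_other_scale M m g c : c > 0 -> min_other M m (fun i => scale c (g i)) = scale c (min_other M m g).
Proof. intros Hc. unfold min_other. induction (seq 0 M); simpl; auto.
  destruct (Nat.eq_dec a m); auto. rewrite IHl, scale_min; auto. Qed.

Lemma fold_PInf (g : nat -> ER) l :
  fold_right ERplus (Fin 0) (map g l) = PInf <-> exists k, In k l /\ g k = PInf.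
Proof. induction l; simpl.
  - split; [discriminate| intros [k [[] _]]].
  - split.
    + intros H. destruct (g a) eqn:Ea.
      * destruct (fold_right ERplus (Fin 0) (map g l)) eqn:Ef; simpl in H; [discriminate|].
        destruct (proj1 IHl eq_refl) as [k [Hk1 Hk2]]. eauto.
      * eauto.
    + intros [k [[->|Hk] Hg]]. { rewrite Hg; reflexivity. }
      assert (fold_right ERplus (Fin 0) (map g l) = PInf) as E by (apply IHl; eauto).
      rewrite E. destruct (g a); reflexivity. Qed.

Lemma fold_fin (g : nat -> ER) l : (forall k, In k l -> g k <> PInf) ->
  fold_right ERplus (Fin 0) (map g l) = Fin (rsum l (fun k => ER_fin (g k))).
Proof. induction l; simpl; intros H; auto.
  rewrite IHl by auto. destruct (g a) eqn:E; [|exfalso; eapply H; eauto]. reflexivity. Qed.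

Lemma fold_const x l : l <> [] -> fold_right ERplus (Fin 0) (map (fun _ : nat => x) l) = scale (INR (length l)) x.
Proof. induction l; intros H; [congruence|]. destruct l.
  - simpl. destruct x; simpl; auto. f_equal; ring.
  - change (ERplus x (fold_right ERplus (Fin 0) (map (fun _ : nat => x) (n :: l))) = scale (INR (length (a :: n :: l))) x).
    rewrite IHl by discriminate. destruct x; simpl; auto. f_equal.
    replace (length (n::l)) with (S (length l)) by reflexivity. ring. Qed.

Lemma rsum_shift n : forall a f, rsum (seq a n) f = rsum (seq 0 n) (fun k => f (a + k)%nat).
Proof. induction n; intros a f; simpl; auto. unfold rsum; simpl. fold (rsum (seq (S a) n) f).
  fold (rsum (seq 1 n) (fun k => f (a+k)%nat)). rewrite IHn, (IHn 1%nat).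
  replace (a + 0)%nat with a by lia. f_equal. apply rsum_ext. intros k _. f_equal. lia. Qed.

Lemma mix_rel p d p' d' a : a > 0 ->
  ((exists j, p j <> 0 /\ d j = PInf) <-> (exists j, p' j <> 0 /\ d' j = PInf)) ->
  (~ (exists j, p j <> 0 /\ d j = PInf) -> forall v,
      lim_ps (fun j => p' j * ER_fin (d' j)) (a * v) <-> lim_ps (fun j => p j * ER_fin (d j)) v) ->
  mix p' d' = scale a (mix p d).
Proof. intros Ha HC HS. unfold mix.
  destruct (excluded_middle_informative (exists j, p' j <> 0 /\ d' j = PInf)) as [h1|h1];
  destruct (excluded_middle_informative (exists j, p j <> 0 /\ d j = PInf)) as [h2|h2];
  try reflexivity; try tauto.
  specialize (HS h2).
  destruct (excluded_middle_informative (exists v, infinite_sum (fun j => p' j * ER_fin (d' j)) v)) as [e1|e1];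
  destruct (excluded_middle_informative (exists v, infinite_sum (fun j => p j * ER_fin (d j)) v)) as [e2|e2];
  try reflexivity.
  - destruct (constructive_indefinite_description _ e1) as [v1 H1].
    destruct (constructive_indefinite_description _ e2) as [v2 H2]. simpl. f_equal.
    apply inf_sum_iff in H2. apply HS in H2. apply inf_sum_iff in H2.
    eapply uniqueness_sum; eauto.
  - exfalso. apply e2. destruct e1 as [v1 H1]. exists (v1 / a).
    apply inf_sum_iff. apply HS. replace (a * (v1/a)) with v1 by (field; lra). apply inf_sum_iff; auto.
  - exfalso. apply e1. destruct e2 as [v2 H2]. exists (a * v2).
    apply inf_sum_iff. apply HS. apply inf_sum_iff; auto. Qed.

Lemma const_sum_zero c : infinite_sum (fun _ => c) c -> c = 0.
Proof. intros H. apply inf_sum_iff in H.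
  assert (E : forall n, psum (fun _ => c) n = INR n * c).
  { induction n. unfold psum, rsum; simpl; ring.
    unfold psum in *. rewrite seq_S, rsum_app, IHn. rewrite S_INR. unfold rsum; simpl. ring. }
  destruct (Req_dec c 0) as [|Hc]; auto. exfalso.
  assert (Ha : Rabs c > 0) by (apply Rabs_pos_lt; auto).
  destruct (H (Rabs c / 2) ltac:(lra)) as [N HN].
  pose proof (HN N ltac:(lia)) as H1. pose proof (HN (S N) ltac:(lia)) as H2.
  rewrite E in H1, H2. rewrite S_INR in H2.
  replace ((INR N + 1) * c - c) with (INR N * c) in H2 by ring.
  pose proof (Rabs_triang (INR N * c) (-(INR N * c - c))) as T.
  rewrite Rabs_Ropp in T. replace (INR N * c + - (INR N * c - c)) with c in T by ring.
  lra. Qed.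

Lemma prob_split (X : MeasSpace) (Q : (X -> Prop) -> R) (phi : X -> bool) : is_prob X Q -> det_quant X phi ->
  0 <= fq X Q true phi /\ 0 <= fq X Q false phi /\ fq X Q false phi + fq X Q true phi = 1.
Proof. intros [Hnn [Hfull Hadd]] Hphi. unfold fq, det_quant in *.
  set (A := fun s : X => phi s = true). set (B := fun s : X => phi s = false).
  set (E := fun _ : X => False).
  assert (HB : msets X B).
  { replace B with (fun s => ~ A s). apply ms_compl; auto.
    apply functional_extensionality; intros s; apply propositional_extensionality.
    unfold A, B; destruct (phi s); split; intros; congruence. }
  assert (HE : msets X E).
  { replace E with (fun s : X => ~ (fun _ : X => True) s). apply ms_compl, ms_full.
    apply functional_extensionality; intros s; apply propositional_extensionality.
    unfold E; tauto. }
  assert (PE : Q E = 0).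
  { apply const_sum_zero. specialize (Hadd (fun _ => E) (fun _ => HE) ltac:(unfold E; tauto)).
    assert (EE : (fun s : X => exists _ : nat, E s) = E).
    { apply functional_extensionality; intros s; apply propositional_extensionality.
      unfold E; split; [intros [_ []]| tauto]. }
    simpl in Hadd. rewrite EE in Hadd. exact Hadd. }
  set (U := fun n : nat => match n with 0%nat => A | 1%nat => B | _ => E end).
  assert (HU : forall n, msets X (U n)) by (intros [|[|n]]; simpl; auto).
  assert (HD : forall n n' s, n <> n' -> U n s -> U n' s -> False).
  { intros [|[|n]] [|[|n']] s Hn; simpl; unfold A, B, E; try congruence; tauto. }
  specialize (Hadd U HU HD).
  replace (fun s : X => exists n, U n s) with (fun _ : X => True) in Hadd.
  2:{ apply functional_extensionality; intros s; apply propositional_extensionality.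
      split; auto. intros _. destruct (phi s) eqn:Ep; [exists 0%nat | exists 1%nat]; simpl; unfold A, B; auto. }
  rewrite Hfull in Hadd.
  assert (Hs : infinite_sum (fun n => Q (U n)) (Q B + Q A)).
  { intros eps He. exists 1%nat. intros n Hn. destruct n; [lia|].
    assert (forall m, sum_f_R0 (fun n => Q (U n)) (S m) = Q B + Q A) as F.
    { induction m. simpl. ring. rewrite tech5, IHm. simpl. rewrite PE. ring. }
    rewrite F. unfold Rdist. rewrite Rminus_diag, Rabs_R0. lra. }
  pose proof (uniqueness_sum _ _ _ Hadd Hs).
  repeat split; [apply Hnn; auto | apply Hnn; auto | fold A B; lra]. Qed.

Lemma kl_bound a b : 0 <= a -> 0 <= b ->
  kl_term a b = PInf \/ exists r, kl_term a b = Fin r /\ r >= a - b.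
Proof. intros Ha Hb. unfold kl_term.
  destruct (Req_EM_T a 0) as [->|Ha0]; [right; exists 0; split; auto; lra|].
  destruct (Req_EM_T b 0) as [->|Hb0]; [left; auto|]. right. eexists; split; [reflexivity|].
  assert (a > 0) by lra. assert (b > 0) by lra.
  set (y := b / a). assert (y > 0) by (unfold y; apply Rdiv_lt_0_compat; lra).
  replace (a / b) with (/ y) by (unfold y; field; lra). rewrite ln_Rinv by lra.
  pose proof (exp_ineq1_le (ln y)). rewrite exp_ln in H2 by lra.
  assert (a * y = b) by (unfold y; field; lra). nra. Qed.

Lemma KL_det_nn (X : MeasSpace) (P : nat -> (X -> Prop) -> R) m m' (phi : X -> bool) : is_prob X (P m) -> is_prob X (P m') -> det_quant X phi ->
  ERnn (KL_det X P m m' phi).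
Proof. intros H1 H2 Hq. destruct (prob_split X (P m) phi H1 Hq) as [a1 [a0 sa]].
  destruct (prob_split X (P m') phi H2 Hq) as [b1 [b0 sb]].
  unfold KL_det.
  destruct (kl_bound _ _ a0 b0) as [E0|[r0 [E0 R0]]]; rewrite E0; [exact I|].
  destruct (kl_bound _ _ a1 b1) as [E1|[r1 [E1 R1]]]; rewrite E1; [exact I|].
  simpl. lra. Qed.

Lemma divmod_blk K j k : (k < K)%nat -> ((j*K + k) / K = j /\ (j*K + k) mod K = k)%nat.
Proof. intros Hk. split.
  - rewrite Nat.add_comm, Nat.div_add by lia. rewrite Nat.div_small by lia. lia.
  - rewrite Nat.add_comm, Nat.Div0.mod_add. apply Nat.mod_small; lia. Qed.

Lemma rsum_const l c : rsum l (fun _ => c) = INR (length l) * c.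
Proof. induction l; unfold rsum in *; simpl; [ring|]. rewrite IHl.
  destruct (length l); simpl; ring. Qed.

Lemma mix_block K (c : nat -> R) (d : nat -> nat -> ER) : (1 <= K)%nat -> (forall j, 0 <= c j) ->
  (forall j k, (k < K)%nat -> ERnn (d j k)) ->
  mix (fun n => c (n / K)%nat) (fun n => d (n / K)%nat (n mod K)%nat) =
  mix c (fun j => fold_right ERplus (Fin 0) (map (d j) (seq 0 K))).
Proof. intros HK Hc Hd. rewrite <- (scale_1 (mix c _)). apply mix_rel; [lra| |].
  - split.
    + intros [j [Hcj HF]]. apply fold_PInf in HF. destruct HF as [k [Hk HF]].
      apply in_seq in Hk. destruct (divmod_blk K j k ltac:(lia)) as [E1 E2].
      exists (j*K + k)%nat. rewrite E1, E2. auto.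
    + intros [n [Hcn HF]]. exists (n / K)%nat. split; auto. apply fold_PInf.
      exists (n mod K)%nat. split; auto. apply in_seq. pose proof (Nat.mod_upper_bound n K). lia.
  - intros Hnot v. rewrite Rmult_1_l. apply (block_lim _ _ K); auto.
    + intros n. apply Rmult_le_pos; auto. apply ER_fin_nn, Hd, Nat.mod_upper_bound. lia.
    + intros j. rewrite rsum_shift.
      rewrite (rsum_ext _ _ (fun k => c j * ER_fin (d j k))).
      2:{ intros k Hk. apply in_seq in Hk. destruct (divmod_blk K j k ltac:(lia)) as [E1 E2].
          rewrite E1, E2. reflexivity. }
      rewrite rsum_scal. destruct (Req_dec (c j) 0) as [E|E]; [rewrite E; ring|].
      rewrite fold_fin; [reflexivity|]. intros k Hk HP. apply Hnot. exists j. split; auto.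
      apply fold_PInf. eauto. Qed.

Lemma mix_scale p d a : a > 0 -> mix p (fun j => scale a (d j)) = scale a (mix p d).
Proof. intros Ha. apply mix_rel; auto.
  - split; intros [j [H1 H2]]; exists j; split; auto; destruct (d j); simpl in *; auto; discriminate.
  - intros _ v. replace (fun j => p j * ER_fin (scale a (d j))) with (fun j => a * (p j * ER_fin (d j))).
    apply lim_scal; auto. apply functional_extensionality; intros j; destruct (d j); simpl; ring. Qed.

Lemma mix_wscale p d a : a > 0 -> mix (fun j => p j / a) d = scale (/ a) (mix p d).
Proof. intros Ha. apply mix_rel. apply Rinv_0_lt_compat; auto.
  - split; intros [j [H1 H2]]; exists j; split; auto.
    + intros E. apply H1. apply (f_equal (fun x => x * a)) in E. field_simplify in E; lra.
    + intros E. apply H1. rewrite E. field. lra.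
  - intros _ v. replace (fun j => p j / a * ER_fin (d j)) with (fun j => / a * (p j * ER_fin (d j))).
    apply lim_scal. apply Rinv_0_lt_compat; auto. apply functional_extensionality; intros j. field. lra. Qed.

Theorem proposition5p1 (X : MeasSpace) (M K : nat)
    (P : nat -> (X -> Prop) -> R) (Pk : nat -> nat -> (X -> Prop) -> R) :
  (2 <= K)%nat ->
  (forall m, (m < M)%nat -> is_prob X (P m)) ->
  (forall k m, (k < K)%nat -> (m < M)%nat -> Pk k m = P m) ->
  forall (m : nat), (m < M)%nat ->
  forall (p : nat -> R) (phi0 : nat -> X -> bool),
    maximin X M P m p phi0 ->
    maximin_vec X M K Pk m p (fun j (k : nat) => phi0 j).
Proof.
  intros HK Hprob HPk m Hm p phi0 [Hrq Hmax].
  assert (HKr : INR K > 0) by (apply lt_0_INR; lia).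
  split.
  { destruct Hrq as [h1 [h2 h3]]. split; [|split]; auto. intros j k _. apply h3. }
  intros q psi [Hq0 [Hq1 Hpsi]].
  set (w := fun n => q (n / K)%nat / INR K).
  set (e := fun n => psi (n / K)%nat (n mod K)%nat).
  assert (Hw : rand_quant X w e).
  { split; [|split].
    - intros n. unfold w. apply Rmult_le_pos; auto. left; apply Rinv_0_lt_compat; auto.
    - apply inf_sum_iff. apply (block_lim w q K 1); [lia| | |].
      + intros n. unfold w. apply Rmult_le_pos; auto. left; apply Rinv_0_lt_compat; auto.
      + intros j. rewrite rsum_shift.
        rewrite (rsum_ext _ _ (fun _ => q j / INR K)).
        2:{ intros k Hk. apply in_seq in Hk. destruct (divmod_blk K j k ltac:(lia)) as [E1 E2].
            unfold w. rewrite E1. reflexivity. }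
        rewrite rsum_const, seq_length. field. lra.
      + apply inf_sum_iff; auto.
    - intros n. unfold e. apply Hpsi. apply Nat.mod_upper_bound. lia. }
  specialize (Hmax w e Hw).
  assert (HPm : forall m' k, (m' < M)%nat -> (k < K)%nat ->
     KL_det X (Pk k) m m' = KL_det X P m m').
  { intros m' k Hm' Hk. unfold KL_det, fq. rewrite !HPk by auto. reflexivity. }
  assert (C1 : forall m', (m' < M)%nat ->
     KL_rand_vec X K Pk m m' q psi = scale (INR K) (KL_rand X P m m' w e)).
  { intros m' Hm'. unfold KL_rand, KL_rand_vec, w, e.
    rewrite (mix_block K (fun j => q j / INR K) (fun j k => KL_det X P m m' (psi j k))).
    - rewrite mix_wscale by auto. rewrite scale_comp, Rinv_r, scale_1 by lra.
      f_equal. apply functional_extensionality; intros j. unfold KL_det_vec. f_equal.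
      apply map_ext_in. intros k Hk. apply in_seq in Hk. rewrite HPm by lia. reflexivity.
    - lia.
    - intros j. apply Rmult_le_pos; auto. left; apply Rinv_0_lt_compat; auto.
    - intros j k Hk. apply KL_det_nn; auto. apply Hpsi; auto. }
  assert (C2 : forall m', (m' < M)%nat ->
     KL_rand_vec X K Pk m m' p (fun j (k : nat) => phi0 j) = scale (INR K) (KL_rand X P m m' p phi0)).
  { intros m' Hm'. unfold KL_rand, KL_rand_vec. rewrite <- mix_scale by auto. f_equal.
    apply functional_extensionality; intros j. unfold KL_det_vec.
    rewrite (map_ext_in _ (fun _ => KL_det X P m m' (phi0 j))).
    - rewrite fold_const, seq_length; auto. destruct K; [lia|]. discriminate.
    - intros k Hk. apply in_seq in Hk. rewrite HPm by lia. reflexivity. }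
  unfold I_state_vec, I_state in *.
  rewrite (min_other_ext _ _ _ _ C1), (min_other_ext _ _ _ _ C2).
  rewrite !min_other_scale by auto. apply scale_le; auto.
Qed.
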